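(* Let $\mathcal{G}=(G,\lambda)$ be a simple temporal clique with vertex set $V$, and let $u,v,w$ be three distinct vertices such that $\{u,v\}=e^-(v)$ and $\{u,w\}=e^+(w)$. Let $S'$ be a temporal spanner of the simple temporal clique $\mathcal{G}[V\setminus\{u\}]$ (the complete graph on $V\setminus\{u\}$ with the restriction of $\lambda$). Then $S=S'\cup\{\{u,v\},\{u,w\}\}$ is a temporal spanner of $\mathcal{G}$.
   Context: A simple temporal clique is a pair $\mathcal{G}=(G,\lambda)$ where $G=(V,E)$ is the complete graph on a finite vertex set $V$ and $\lambda:E\to\mathbb{N}$ assigns to each edge a single integer label such that any two distinct edges sharing an endpoint have different labels. A journey from $x$ to $y$ is a sequence of vertices $x=u_0,u_1,\dots,u_k=y$ ($k\ge1$) with $\lambda(\{u_{i-1},u_i\})<\lambda(\{u_i,u_{i+1}\})$ for all $1\le i<k$. A set $E'\subseteq E$ is a temporal spanner of $\mathcal{G}$ if for every ordered pair of distinct vertices $x,y$ there is a journey from $x$ to $y$ all of whose edges belong to $E'$. For a vertex $v$, $e^-(v)$ (resp. $e^+(v)$) denotes the edge incident to $v$ with the smallest (resp. largest) label. *)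

(* Defs.v *)
From mathcomp Require Import all_boot.
Set Implicit Arguments. Unset Strict Implicit. Unset Printing Implicit Defensive.

Section TC.
Variable V : finType.

Definition edges_of (W : {set V}) : {set {set V}} :=
  [set e : {set V} | (e \subset W) && (#|e| == 2)].

(* lam : {set V} -> nat is the labelling; only its values on edges matter.
   (G[W], lam) is a simple temporal clique: edges sharing an endpoint get
   distinct labels. *)
Definition simple_temporal_clique (W : {set V}) (lam : {set V} -> nat) : Prop :=
  forall x y z, x \in W -> y \in W -> z \in W ->
    x != y -> x != z -> y != z -> lam [set x; y] != lam [set x; z].

Definition is_e_minus (W : {set V}) (lam : {set V} -> nat) (v : V) (e : {set V}) :=
  [/\ e \in edges_of W, v \in e &
      forall e', e' \in edges_of W -> v \in e' -> lam e <= lam e'].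

Definition is_e_plus (W : {set V}) (lam : {set V} -> nat) (v : V) (e : {set V}) :=
  [/\ e \in edges_of W, v \in e &
      forall e', e' \in edges_of W -> v \in e' -> lam e' <= lam e].

Definition path_edges (x : V) (p : seq V) : seq {set V} :=
  pairmap (fun a b => [set a; b]) x p.

Definition journey_in (lam : {set V} -> nat) (E' : {set {set V}}) (x y : V)
    (p : seq V) : bool :=
  [&& p != [::], last x p == y, path (fun a b => a != b) x p,
      sorted ltn (map lam (path_edges x p)) &
      all (fun e => e \in E') (path_edges x p)].

Definition temporal_spanner (W : {set V}) (lam : {set V} -> nat)
    (E' : {set {set V}}) : Prop :=
  E' \subset edges_of W /\
  forall x y, x \in W -> y \in W -> x != y ->
    exists p : seq V, journey_in lam E' x y p.
End TC.

(* Main.v *)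
Require Import Defs.
From mathcomp Require Import all_boot.

Lemma path_edges_rcons (V : finType) (x y : V) p :
  path_edges x (rcons p y) = rcons (path_edges x p) [set last x p; y].
Proof. by elim: p x => [|a p IH] x //=; rewrite /path_edges /= -IH. Qed.

Lemma sorted_rcons2 (T : Type) (r : rel T) s a b :
  sorted r (rcons (rcons s a) b) = sorted r (rcons s a) && r a b.
Proof.
case: s => [|c s] /=; first by rewrite andbT.
by rewrite rcons_path last_rcons.
Qed.

Lemma journey_sub (V : finType) lam (E1 E2 : {set {set V}}) x y p :
  E1 \subset E2 -> journey_in lam E1 x y p -> journey_in lam E2 x y p.
Proof.
move=> sub /and5P[h1 h2 h3 h4 h5]; apply/and5P; split=> //.
by apply/allP => e /(allP h5); apply: (subsetP sub).
Qed.

Theorem theorem1 (V : finType) (lam : {set V} -> nat) (u v w : V)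
    (S' : {set {set V}}) :
  simple_temporal_clique [set: V] lam ->
  u != v -> u != w -> v != w ->
  is_e_minus [set: V] lam v [set u; v] ->
  is_e_plus [set: V] lam w [set u; w] ->
  temporal_spanner ([set: V] :\ u) lam S' ->
  temporal_spanner [set: V] lam (S' :|: [set [set u; v]; [set u; w]]).
Proof.
move=> Hs Huv Huw Hvw [_ _ Hmin] [_ _ Hmax] [HS' HJ].
have edgeS a b : [set a; b] \in S' -> b != u.
  move/(subsetP HS'); rewrite inE => /andP[/subsetP sb _].
  by have := sb b; rewrite !inE eqxx orbT => /(_ isT) /andP[].
have edgeT a b : a != b -> [set a; b] \in edges_of [set: V].
  by move=> ab; rewrite inE subsetT cards2 ab.
have inSuv : [set u; v] \in S' :|: [set [set u; v]; [set u; w]].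
  by rewrite !inE eqxx orbT.
have inSuw : [set u; w] \in S' :|: [set [set u; v]; [set u; w]].
  by rewrite !inE eqxx !orbT.
have subS : S' \subset S' :|: [set [set u; v]; [set u; w]] by apply: subsetUl.
split.
  apply/subsetP => e; rewrite in_setU => /orP[/(subsetP HS')|].
    by rewrite !inE => /andP[_ ->]; rewrite subsetT.
  by rewrite !inE => /orP[] /eqP ->; rewrite subsetT cards2 ?Huv ?Huw.
move=> x y _ _ Hxy.
case: (eqVneq x u) => [Ex|Hxu].
  subst x; case: (eqVneq y v) => [->|Hyv].
    by exists [:: v]; rewrite /journey_in /= eqxx Huv inSuv.
  case: (eqVneq y w) => [->|Hyw].
    by exists [:: w]; rewrite /journey_in /= eqxx Huw inSuw.
  have [||| p Hp] := HJ v y; [by rewrite !inE eq_sym Huv | by rewrite !inE eq_sym Hxy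
    | by rewrite eq_sym Hyv | ].
  exists (v :: p); move: Hp => /and5P[h1 h2 h3 h4 h5].
  rewrite /journey_in /= Huv h2 h3 inSuv /=.
  apply/andP; split; last by apply/allP => e /(allP h5); apply: (subsetP subS).
  case: p h1 h2 h3 h4 h5 => [|p1 p] //= _ _ /andP[vp1 _] h4 /andP[h5 _].
  rewrite /path_edges /= in h4 *; rewrite h4 andbT.
  have p1u := edgeS _ _ h5.
  rewrite ltn_neqAle Hmin ?edgeT ?inE ?eqxx // andbT.
  by have := Hs v u p1; rewrite setUC !inE => /(_ isT isT isT); apply; rewrite // eq_sym.
case: (eqVneq y u) => [Ey|Hyu]; last first.
  have [||| p Hp] := HJ x y; [by rewrite !inE Hxu | by rewrite !inE Hyu | by [] | ].
  by exists p; apply: journey_sub Hp.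
subst y.
case: (eqVneq x w) => [->|Hxw].
  by exists [:: u]; rewrite /journey_in /= eqxx eq_sym Huw setUC inSuw.
case: (eqVneq x v) => [->|Hxv].
  by exists [:: u]; rewrite /journey_in /= eqxx eq_sym Huv setUC inSuv.
have [||| p Hp] := HJ x w; [by rewrite !inE Hxu | by rewrite !inE eq_sym Huw | by [] | ].
move: Hp => /and5P[h1 /eqP h2 h3 h4 h5].
exists (rcons p u).
case/lastP: p h1 h2 h3 h4 h5 => [|q z] // _; rewrite last_rcons => Ez.
subst z => h3 h4 h5.
rewrite path_edges_rcons map_rcons in h4.
rewrite path_edges_rcons all_rcons in h5.
rewrite rcons_path in h3.
case/andP: h3 => h3 zw; case/andP: h5 => hz h5.
have zu : last x q != u by apply: (edgeS w); rewrite setUC.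
rewrite /journey_in rcons_path !last_rcons eqxx /= rcons_path h3 zw (eq_sym w u) Huw /=.
rewrite !path_edges_rcons !last_rcons !map_rcons sorted_rcons2 all_rcons all_rcons h4.
rewrite (subsetP subS _ hz) (setUC [set w] [set u]) inSuw /=.
have -> : (rcons (rcons q w) u != [::]) = true by case: (rcons q w).
rewrite /=; apply/andP; split; last by apply/allP => e /(allP h5); apply: (subsetP subS).
rewrite ltn_neqAle Hmax ?andbT; last 2 first.
- exact: edgeT.
- by rewrite !inE eqxx orbT.
rewrite (setUC [set last x q]) (setUC [set u]).
by apply: Hs; rewrite ?inE // eq_sym.
Qed.
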